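(* Let $n,r,s,t\in\mathbb N$, let $G_{n,r,s,t}=(V,E,c)$ be the graph described in the context, and let $F\subseteq E$ be functional. Then the set of optimal edges for the subgraph $G_F$ (i.e. the set of edges $(u,v)\in F$ with $c(u,v)+y(v)=y(u)$, where $y(x)$ denotes the cost of a shortest path from $x$ to the target $\mathsf t$ in $G_F$) is exactly $\mathcal B_F$.
   Context: The graph $G_{n,r,s,t}$. Let $[m]=\{1,\dots,m\}$ and $\epsilon=1/(rs)$. Vertices: a target $\mathsf t$ (also denoted $u_{n+1}$ and $w_{n+1}$), $u_i,w_i$ for $i\in[n]$, $a_{i,j,k}$ for $i\in[n],j\in[r],k\in[s]$, and $b_{i,j}$ for $i\in[n],j\in[rs]$. Edges (for all $i\in[n]$; ''$t$ copies'' means $t$ parallel edges indexed by $\ell\in[t]$): - $a^1_{i,j,k}:a_{i,j,k}\to a_{i,j,k+1}$, cost $0$ ($j\in[r],k\in[s-1]$); $a^1_{i,j,s}:a_{i,j,s}\to b_{i,1}$, cost $0$; - $a^{0,\ell}_{i,j,k}:a_{i,j,k}\to u_{i+1}$, cost $2^{2i+1}+(k-1)\epsilon$, $t$ copies ($j\in[r],k\in[s]$); - $b^1_{i,j}:b_{i,j}\to b_{i,j+1}$, cost $0$ ($j\in[rs-1]$); $b^1_{i,rs}:b_{i,rs}\to w_{i+1}$, cost $0$; - $b^{0,\ell}_{i,j}:b_{i,j}\to u_{i+1}$, cost $2^{2i+1}+1+(j-1)\epsilon$, $t$ copies ($j\in[rs]$); - $u^{1,\ell}_i:u_i\to b_{i,1}$,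 cost $0$, $t$ copies; $u^{0,\ell}_i:u_i\to u_{i+1}$, cost $2^{2i}$, $t$ copies; - $w^{j,\ell}_i:w_i\to a_{i,j,1}$, cost $0$, $t$ copies for each $j\in[r]$; $w^{0,\ell}_i:w_i\to w_{i+1}$, cost $2^{2i}$, $t$ copies. Edge groups: ${\bf a}^1_{i,j}=\{a^1_{i,j,k}:k\in[s]\}$, ${\bf a}^0_{i,j,k}=\{a^{0,\ell}_{i,j,k}:\ell\in[t]\}$, ${\bf b}^1_i=\{b^1_{i,j}:j\in[rs]\}$, ${\bf b}^0_{i,j}=\{b^{0,\ell}_{i,j}:\ell\in[t]\}$, ${\bf u}^1_i=\{u^{1,\ell}_i\}_\ell$, ${\bf u}^0_i=\{u^{0,\ell}_i\}_\ell$, ${\bf w}^j_i=\{w^{j,\ell}_i\}_\ell$ ($j\in[r]$), ${\bf w}^0_i=\{w^{0,\ell}_i\}_\ell$. The multi-edges are the sets ${\bf u}^1_i,{\bf u}^0_i,{\bf w}^0_i,{\bf b}^0_{i,j},{\bf a}^0_{i,j,k},{\bf w}^j_i$. A set $F\subseteq E$ is functional if it intersects every multi-edge. Write ${\bf a}^1_i\sqsubseteq F$ if ${\bf a}^1_{i,j}\subseteq F$ for some $j\in[r]$. Define $last({\bf b}^1_i,F)=\max(\{0\}\cup\{j\in[rs]:b^1_{i,j}\notin F\})$, $last({\bf a}^1_{i,j},F)=\max(\{0\}\cup\{k\in[s]:a^1_{i,j,k}\notin F\})$, and $reset(F)=\max(\{0\}\cup\{i\in[n]:{\bf b}^1_i\subseteq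 F\text{ and not }{\bf a}^1_i\sqsubseteq F\})$. For functional $F$, $\mathcal B_F\subseteq F$ consists exactly of the following edges: (i) for each $i>reset(F)$ with ${\bf b}^1_i\subseteq F$: all $b^1_{i,j}$ ($j\in[rs]$); for $j\in[r],k\in[s]$: $a^1_{i,j,k}$ if $k>last({\bf a}^1_{i,j},F)$, and ${\bf a}^0_{i,j,k}\cap F$ otherwise; ${\bf u}^1_i\cap F$; ${\bf w}^j_i\cap F$ for every $j$ with ${\bf a}^1_{i,j}\subseteq F$. (ii) for each $i>reset(F)$ with ${\bf b}^1_i\not\subseteq F$: for $j\in[rs]$: $b^1_{i,j}$ if $j>last({\bf b}^1_i,F)$, and ${\bf b}^0_{i,j}\cap F$ otherwise; ${\bf a}^0_{i,j,k}\cap F$ for all $j,k$; ${\bf u}^0_i\cap F$; ${\bf w}^0_i\cap F$. (iii) for $i=reset(F)$ (if $\ge1$): all $b^1_{i,j}$; for $j\in[r],k\in[s]$: $a^1_{i,j,k}$ if $k>last({\bf a}^1_{i,j},F)$, and ${\bf a}^0_{i,j,k}\cap F$ otherwise; ${\bf u}^1_i\cap F$; ${\bf w}^0_i\cap F$. (iv) for each $i<reset(F)$: ${\bf b}^0_{i,j}\cap F$ for all $j\in[rs]$; ${\bf a}^0_{i,j,k}\cap F$ for all $j,k$; ${\bf u}^0_i\cap F$; ${\bf w}^j_i\cap F$ for all $j\in[r]$. *)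

(* Defs.v *)
From mathcomp Require Import all_boot all_order all_algebra.
Set Implicit Arguments. Unset Strict Implicit. Unset Printing Implicit Defensive.
Import Order.TTheory GRing.Theory Num.Theory.

(* Vertices of G_{n,r,s,t}.  The target t = u_{n+1} = w_{n+1} is [T]. *)
Inductive vertex : Type :=
| U (i : nat) | W (i : nat) | A (i j k : nat) | B (i j : nat) | T.

(* Edge labels (l is the copy index in [t]). *)
Inductive edge : Type :=
| EA1 (i j k : nat)
| EA0 (i j k l : nat)
| EB1 (i j : nat)
| EB0 (i j l : nat)
| EU1 (i l : nat)
| EU0 (i l : nat)
| EW  (i j l : nat)
| EW0 (i l : nat).

Definition inI (m x : nat) : bool := (1 <= x <= m)%N.

Section Graph.
Variables n r s t : nat.

Definition uvert (i : nat) : vertex := if (i <= n)%N then U i else T.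
Definition wvert (i : nat) : vertex := if (i <= n)%N then W i else T.

Definition inVert (v : vertex) : bool :=
  match v with
  | U i | W i => inI n i
  | A i j k => [&& inI n i, inI r j & inI s k]
  | B i j => inI n i && inI (r * s) j
  | T => true
  end.

Definition inEdges (e : edge) : bool :=
  match e with
  | EA1 i j k => [&& inI n i, inI r j & inI s k]
  | EA0 i j k l => [&& inI n i, inI r j, inI s k & inI t l]
  | EB1 i j => inI n i && inI (r * s) j
  | EB0 i j l => [&& inI n i, inI (r * s) j & inI t l]
  | EU1 i l | EU0 i l | EW0 i l => inI n i && inI t l
  | EW i j l => [&& inI n i, inI r j & inI t l]
  end.

Definition src (e : edge) : vertex :=
  match e with
  | EA1 i j k | EA0 i j k _ => A i j k
  | EB1 i j | EB0 i j _ => B i j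
  | EU1 i _ | EU0 i _ => U i
  | EW i _ _ | EW0 i _ => W i
  end.

Definition dst (e : edge) : vertex :=
  match e with
  | EA1 i j k => if (k < s)%N then A i j k.+1 else B i 1
  | EA0 i _ _ _ => uvert i.+1
  | EB1 i j => if (j < r * s)%N then B i j.+1 else wvert i.+1
  | EB0 i _ _ => uvert i.+1
  | EU1 i _ => B i 1
  | EU0 i _ => uvert i.+1
  | EW i j _ => A i j 1
  | EW0 i _ => wvert i.+1
  end.

Local Open Scope ring_scope.

Definition eps : rat := ((r * s)%N%:R)^-1.

Definition cost (e : edge) : rat :=
  match e with
  | EA1 _ _ _ | EB1 _ _ | EU1 _ _ | EW _ _ _ => 0
  | EA0 i _ k _ => (2 ^ (2 * i + 1))%N%:R + (k - 1)%N%:R * eps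
  | EB0 i j _ => (2 ^ (2 * i + 1))%N%:R + 1 + (j - 1)%N%:R * eps
  | EU0 i _ | EW0 i _ => (2 ^ (2 * i))%N%:R
  end.

Local Close Scope ring_scope.

Definition functional (F : pred edge) : Prop :=
  forall i, inI n i ->
    (exists2 l, inI t l & F (EU1 i l)) /\
    (exists2 l, inI t l & F (EU0 i l)) /\
    (exists2 l, inI t l & F (EW0 i l)) /\
    (forall j, inI (r * s) j -> exists2 l, inI t l & F (EB0 i j l)) /\
    (forall j k, inI r j -> inI s k -> exists2 l, inI t l & F (EA0 i j k l)) /\
    (forall j, inI r j -> exists2 l, inI t l & F (EW i j l)).

Definition b1sub (F : pred edge) (i : nat) : bool :=
  all (fun j => F (EB1 i j)) (iota 1 (r * s)).
Definition a1sub (F : pred edge) (i j : nat) : bool :=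
  all (fun k => F (EA1 i j k)) (iota 1 s).
Definition a1sq (F : pred edge) (i : nat) : bool :=
  has (fun j => a1sub F i j) (iota 1 r).

Definition lastB (F : pred edge) (i : nat) : nat :=
  \max_(1 <= j < (r * s).+1 | ~~ F (EB1 i j)) j.
Definition lastA (F : pred edge) (i j : nat) : nat :=
  \max_(1 <= k < s.+1 | ~~ F (EA1 i j k)) k.
Definition reset (F : pred edge) : nat :=
  \max_(1 <= i < n.+1 | b1sub F i && ~~ a1sq F i) i.

Definition inBcond (F : pred edge) (e : edge) : bool :=
  let R := reset F in
  let c1 i := (R < i)%N && b1sub F i in
  let c2 i := (R < i)%N && ~~ b1sub F i in
  let c3 i := (i == R) in
  let c4 i := (i < R)%N in
  match e with
  | EA1 i j k => (c1 i || c3 i) && (lastA F i j < k)%N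
  | EA0 i j k _ => ((c1 i || c3 i) && (k <= lastA F i j)%N) || c2 i || c4 i
  | EB1 i j => c1 i || (c2 i && (lastB F i < j)%N) || c3 i
  | EB0 i j _ => (c2 i && (j <= lastB F i)%N) || c4 i
  | EU1 i _ => c1 i || c3 i
  | EU0 i _ => c2 i || c4 i
  | EW i j _ => (c1 i && a1sub F i j) || c4 i
  | EW0 i _ => c2 i || c3 i
  end.

Definition inBF (F : pred edge) (e : edge) : bool :=
  [&& inEdges e, F e & inBcond F e].

Fixpoint walk_to_T (F : pred edge) (v : vertex) (p : seq edge) : Prop :=
  match p with
  | [::] => v = T
  | e :: p' => F e /\ src e = v /\ walk_to_T F (dst e) p'
  end.

Definition walk_cost (p : seq edge) : rat := (\sum_(e <- p) cost e)%R.

Definition is_shortest_dist (F : pred edge) (y : vertex -> rat) : Prop :=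
  forall v, inVert v ->
    (exists p, walk_to_T F v p /\ walk_cost p = y v) /\
    (forall p, walk_to_T F v p -> (y v <= walk_cost p)%R).

Definition optimal (F : pred edge) (y : vertex -> rat) (e : edge) : Prop :=
  F e /\ (cost e + y (dst e) = y (src e))%R.

End Graph.

(* Main.v *)
Require Import Defs.
From mathcomp Require Import all_boot all_order all_algebra lra zify.
Set Implicit Arguments. Unset Strict Implicit. Unset Printing Implicit Defensive.
Import Order.TTheory GRing.Theory Num.Theory.

Lemma lastP (P : pred nat) N :
  let L := (\max_(1 <= j < N.+1 | P j) j)%N in
  (L <= N)%N /\ (forall j, (L < j <= N)%N -> ~~ P j) /\ ((0 < L)%N -> P L).
Proof.
elim: N => [|N [IH1 [IH2 IH3]]] /=.
  by rewrite big_geq //; split=> // ; split=> // j; lia.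
rewrite big_mkcond big_nat_recr //= -big_mkcond /=.
set L := (\max_(1 <= j < N.+1 | P j) j)%N in IH1 IH2 IH3 *.
case: (boolP (P N.+1)) => HP.
  have -> : maxn L N.+1 = N.+1 by apply/maxn_idPr; lia.
  by split=> //; split=> // j; lia.
rewrite maxn0; split; first lia.
split=> // j Hj.
case: (ltnP N j) => HN.
  by have -> : j = N.+1 by lia.
apply: IH2; lia.
Qed.

Section Main.
Variables (n r s t : nat) (F : pred edge) (y : vertex -> rat).
Hypotheses (r0 : (0<r)%N) (s0 : (0<s)%N)
  (FE : forall e, F e -> inEdges n r s t e) (Ffun : functional n r s t F)
  (Hy : is_shortest_dist n r s F y).

Lemma src_valid e : inEdges n r s t e -> inVert n r s (src e).
Proof. case: e => /=; rewrite /inI; intros; lia. Qed.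

Lemma dst_valid e : inEdges n r s t e -> inVert n r s (dst n r s e).
Proof.
case: e => /=; rewrite /uvert /wvert; intros;
  repeat case: ifP => /=; intros; rewrite /inI in H *; nia.
Qed.

Lemma walk_T p : walk_to_T n r s F T p -> p = [::].
Proof. by case: p => //= e p [_ [He _]]; case: e He. Qed.

Lemma yT : y T = 0%R.
Proof.
have [[p [Hp <-]] _] := Hy (v:=T) isT.
by rewrite (walk_T Hp) /walk_cost big_nil.
Qed.

Lemma bell1 e : F e -> (y (src e) <= cost r s e + y (dst n r s e))%R.
Proof.
move=> He.
have [[p [Hp Hc]] _] := Hy (dst_valid (FE He)).
have [_ H2] := Hy (src_valid (FE He)).
have := H2 (e :: p) (conj He (conj erefl Hp)).
by rewrite /walk_cost big_cons -/(walk_cost r s p) Hc.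
Qed.

Lemma bell2 v : inVert n r s v -> v <> T ->
  exists e, [/\ F e, src e = v & y v = (cost r s e + y (dst n r s e))%R].
Proof.
move=> Hv HT.
have [[p [Hp Hc]] _] := Hy Hv.
case: p Hp Hc => [//|e p] /= [He [Hs Hp]] Hc.
exists e; split=> //.
have [_ H2] := Hy (dst_valid (FE He)).
have h1 := H2 p Hp.
have h2 := bell1 He. rewrite Hs in h2.
move: Hc; rewrite /walk_cost big_cons -/(walk_cost r s p) => Hc.
lra.
Qed.

Lemma yval v (x : rat) : inVert n r s v -> v <> T ->
  (forall e, F e -> src e = v -> (x <= cost r s e + y (dst n r s e))%R) ->
  (exists e, [/\ F e, src e = v & (cost r s e + y (dst n r s e) = x)%R]) ->
  y v = x.
Proof.
move=> Hv HT Hlo [e [He Hs Hx]].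
have [e' [He' Hs' Hy']] := bell2 Hv HT.
have := Hlo e' He' Hs'. have := bell1 He. rewrite Hs. lra.
Qed.


Local Open Scope ring_scope.

Definition qq (i : nat) : rat := (2 ^ (2 * i))%N%:R.
Definition ep (k : nat) : rat := (k - 1)%N%:R * eps r s.

Lemma c2q i : (2 ^ (2 * i + 1))%N%:R = 2 * qq i :> rat.
Proof. by rewrite /qq expnD expn1 natrM mulrC. Qed.

Lemma qS i : qq i.+1 = 4 * qq i.
Proof. by rewrite /qq mulnS expnD natrM mulrC. Qed.

Lemma q4 i : (1 <= i)%N -> 4 <= qq i.
Proof.
move=> Hi; rewrite /qq (_ : 4 = (2 ^ 2)%N%:R) //.
by rewrite ler_nat leq_pexp2l //; lia.
Qed.

Lemma eps_gt0 : 0 < eps r s.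
Proof. by rewrite /eps invr_gt0 ltr0n muln_gt0 r0 s0. Qed.

Lemma ep_ge0 k : 0 <= ep k.
Proof. by rewrite /ep mulr_ge0 // ltW // eps_gt0. Qed.

Lemma ep_lt1 k : (k <= r * s)%N -> ep k < 1.
Proof.
move=> Hk; rewrite /ep /eps.
have H0 : 0 < (r * s)%N%:R :> rat by rewrite ltr0n muln_gt0 r0 s0.
rewrite ltr_pdivrMr // mul1r ltr_nat; lia.
Qed.

Lemma ep_lt1s k : (k <= s)%N -> ep k < 1.
Proof. move=> Hk; apply: ep_lt1; apply: (leq_trans Hk); rewrite leq_pmull //. Qed.

Lemma ep_mono k : (1 <= k)%N -> ep k < ep k.+1.
Proof.
move=> Hk; rewrite /ep ltr_pM2r ?eps_gt0 // ltr_nat; lia.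
Qed.

Lemma ep1 : ep 1 = 0.
Proof. by rewrite /ep subnn mul0r. Qed.

Lemma lastB_le i : (lastB r s F i <= r * s)%N.
Proof. by have [H _] := lastP (fun j => ~~ F (EB1 i j)) (r * s). Qed.
Lemma lastB_F i j : (lastB r s F i < j <= r * s)%N -> F (EB1 i j).
Proof.
have [_ [H _]] := lastP (fun j => ~~ F (EB1 i j)) (r * s).
by move=> Hj; have := H j Hj; rewrite negbK.
Qed.
Lemma lastB_nF i : (0 < lastB r s F i)%N -> ~~ F (EB1 i (lastB r s F i)).
Proof. by have [_ [_ H]] := lastP (fun j => ~~ F (EB1 i j)) (r * s). Qed.
Lemma b1sub_last i : b1sub r s F i = (lastB r s F i == 0)%N.
Proof.
apply/allP/eqP.
  move=> H; apply/eqP; rewrite eqn0Ngt; apply/negP => Hp.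
  have := lastB_nF Hp; rewrite H // mem_iota; have := lastB_le i; lia.
move=> H0 j; rewrite mem_iota => Hj; apply: lastB_F; lia.
Qed.

Lemma lastA_le i j : (lastA s F i j <= s)%N.
Proof. by have [H _] := lastP (fun k => ~~ F (EA1 i j k)) s. Qed.
Lemma lastA_F i j k : (lastA s F i j < k <= s)%N -> F (EA1 i j k).
Proof.
have [_ [H _]] := lastP (fun k => ~~ F (EA1 i j k)) s.
by move=> Hj; have := H k Hj; rewrite negbK.
Qed.
Lemma lastA_nF i j : (0 < lastA s F i j)%N -> ~~ F (EA1 i j (lastA s F i j)).
Proof. by have [_ [_ H]] := lastP (fun k => ~~ F (EA1 i j k)) s. Qed.
Lemma a1sub_last i j : a1sub s F i j = (lastA s F i j == 0)%N.
Proof.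
apply/allP/eqP.
  move=> H; apply/eqP; rewrite eqn0Ngt; apply/negP => Hp.
  have := lastA_nF Hp; rewrite H // mem_iota; have := lastA_le i j; lia.
move=> H0 k; rewrite mem_iota => Hj; apply: lastA_F; lia.
Qed.

Lemma reset_le : (reset n r s F <= n)%N.
Proof. by have [H _] := lastP (fun i => b1sub r s F i && ~~ a1sq r s F i) n. Qed.
Lemma reset_gt i : (reset n r s F < i <= n)%N -> b1sub r s F i -> a1sq r s F i.
Proof.
have [_ [H _]] := lastP (fun i => b1sub r s F i && ~~ a1sq r s F i) n.
move=> Hi Hb; have := H i Hi; rewrite /= Hb /=; by rewrite negbK.
Qed.
Lemma reset_P : (0 < reset n r s F)%N ->
  b1sub r s F (reset n r s F) && ~~ a1sq r s F (reset n r s F).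
Proof. by have [_ [_ H]] := lastP (fun i => b1sub r s F i && ~~ a1sq r s F i) n. Qed.

Lemma srcB e i j : src e = B i j -> e = EB1 i j \/ exists l, e = EB0 i j l.
Proof.
case: e => //= a b; last move=> c; case=> -> ->; [left|right; exists c] => //.
Qed.
Lemma srcA e i j k : src e = A i j k -> e = EA1 i j k \/ exists l, e = EA0 i j k l.
Proof.
case: e => //= a b c; last move=> d; case=> -> -> ->; [left|right; exists d] => //.
Qed.
Lemma srcU e i : src e = U i -> (exists l, e = EU1 i l) \/ exists l, e = EU0 i l.
Proof. case: e => //= a b; case=> ->; [left|right]; exists b => //. Qed.
Lemma srcW e i : src e = W i -> (exists j l, e = EW i j l) \/ exists l, e = EW0 i l.
Proof.
case: e => [a b c|a b c d|a b|a b c|a b|a b|a b c|a b] //= [->];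
  [left; exists b, c|right; exists b] => //.
Qed.


Section Level.
Variables (i : nat) (hi : bool).
Hypotheses (Hi1 : (1 <= i)%N) (Hin : (i <= n)%N).
Local Notation Uu := (y (uvert n i.+1)).
Local Notation Ww := (y (wvert n i.+1)).
Hypothesis Hd : if hi then Ww = Uu else Uu + 4 * qq i <= Ww.
Local Notation LB := (lastB r s F i).

Lemma HiI : inI n i. Proof. by rewrite /inI Hi1 Hin. Qed.

Definition Bv j := if hi && (LB < j)%N then Ww else 2 * qq i + 1 + ep j + Uu.

Lemma yB j : (1 <= j <= r * s)%N -> y (B i j) = Bv j.
Proof.
have hq := q4 Hi1.
have Hf := Ffun HiI.
suff H : forall d j, (j + d = r * s)%N -> (1 <= j)%N -> y (B i j) = Bv j.
  by move=> Hj; apply: (H (r * s - j)%N) => //; lia.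
elim=> [|d IH] {}j Hjd Hj1; (apply: (@yval (B i j) (Bv j)); [by rewrite /= HiI /inI; lia | by [] | | ]).
- have he0 := ep_ge0 j; have he1 := @ep_lt1 j (ltac:(lia)).
  move=> e He /srcB [He1|[l ->]] /=.
    subst e; move: He => /= He.
    have -> : (j < r * s)%N = false by lia.
    rewrite /Bv; have Hd2 := Hd; case Eh: hi Hd2 => Hd2 /=; case: (ltnP LB j) => Hl /=; try lra.
    have Heq : LB = j by have := lastB_le i; lia.
    have := @lastB_nF i (ltac:(lia)); by rewrite Heq He.
  by rewrite c2q /Bv -/(ep j); have Hd2 := Hd; case Eh: hi Hd2 => Hd2 /=; case: (ltnP LB j) => Hl /=; lra.
- case E: (hi && (LB < j)%N).
    exists (EB1 i j); split => //=.
      by apply: lastB_F; move/andP: E => [_ ?]; lia.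
    have -> : (j < r * s)%N = false by lia.
    by rewrite /Bv E add0r.
  have [l _ Hl] := Hf.2.2.2.1 j (ltac:(rewrite /inI; lia)).
  exists (EB0 i j l); split => //=.
  by rewrite /Bv E c2q -/(ep j).
- have IH1 := IH j.+1 (ltac:(lia)) (ltac:(lia)).
  have he0 := ep_ge0 j; have he1 := @ep_lt1 j (ltac:(lia)).
  have hm := ep_mono Hj1.
  move=> e He /srcB [He1|[l ->]] /=.
    subst e; move: He => /= He.
    have -> : (j < r * s)%N = true by lia.
    rewrite IH1 /Bv; have Hd2 := Hd; case Eh: hi Hd2 => Hd2 /=; case: (ltnP LB j) => Hl1; case: (ltnP LB j.+1) => Hl2 /=; try lra.
    have Heq : LB = j by lia.
    have := @lastB_nF i (ltac:(lia)); by rewrite Heq He.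
  by rewrite c2q /Bv -/(ep j); have Hd2 := Hd; case Eh: hi Hd2 => Hd2 /=; case: (ltnP LB j) => Hl /=; lra.
- have IH1 := IH j.+1 (ltac:(lia)) (ltac:(lia)).
  case E: (hi && (LB < j)%N).
    exists (EB1 i j); split => //=.
      by apply: lastB_F; move/andP: E => [_ ?]; lia.
    have -> : (j < r * s)%N = true by lia.
    rewrite IH1 /Bv E; move/andP: E => [-> ?] /=.
    by rewrite ifT ?add0r //; lia.
  have [l _ Hl] := Hf.2.2.2.1 j (ltac:(rewrite /inI; lia)).
  exists (EB0 i j l); split => //=.
  by rewrite /Bv E c2q -/(ep j).
Qed.


Definition hb := hi && b1sub r s F i.

Lemma HWU : hi -> Ww = Uu.
Proof. by move=> H; move: Hd; rewrite H. Qed.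

Lemma rs1 : (1 <= r * s)%N.
Proof. by rewrite muln_gt0 r0 s0. Qed.

Lemma yB1 : y (B i 1) = if hb then Ww else 2 * qq i + 1 + Uu.
Proof.
rewrite yB; last by rewrite /= rs1.
rewrite /Bv /hb ep1 b1sub_last addr0.
by case: hi => //=; case: (lastB r s F i).
Qed.

Definition Av j k := if hb && (lastA s F i j < k)%N then Ww else 2 * qq i + ep k + Uu.

Lemma yA j k : (1 <= j <= r)%N -> (1 <= k <= s)%N -> y (A i j k) = Av j k.
Proof.
move=> Hj.
have hq := q4 Hi1.
have Hf := Ffun HiI.
have HB1 := yB1.
have HW : hb -> Ww = Uu by move=> /andP [H _]; apply: HWU.
set LA := lastA s F i j.
suff H : forall d k, (k + d = s)%N -> (1 <= k)%N -> y (A i j k) = Av j k.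
  by move=> Hk; apply: (H (s - k)%N) => //; lia.
elim=> [|d IH] {}k Hkd Hk1; (apply: (@yval (A i j k) (Av j k)); [by rewrite /= HiI /inI; lia | by [] | | ]).
- have he0 := ep_ge0 k; have he1 := @ep_lt1s k (ltac:(lia)).
  move=> e He /srcA [He1|[l ->]] /=.
    subst e; move: He => /= He.
    have -> : (k < s)%N = false by lia.
    rewrite HB1 /Av -/LA; case Eh: hb HW => HW /=; case: (ltnP LA k) => Hl /=; try lra.
    have Heq : LA = k by have := lastA_le i j; lia.
    have := @lastA_nF i j (ltac:(lia)); by rewrite -/LA Heq He.
  rewrite c2q /Av -/(ep k) -/LA; case Eh: hb HW => HW /=; case: (ltnP LA k) => Hl /=; try lra.
- case E: (hb && (LA < k)%N).
    exists (EA1 i j k); split => //=.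
      by apply: lastA_F; move/andP: E => [_ ?]; lia.
    have -> : (k < s)%N = false by lia.
    by rewrite /Av -/LA E add0r HB1; move/andP: E => [-> _].
  have [l _ Hl] := Hf.2.2.2.2.1 j k (ltac:(rewrite /inI; lia)) (ltac:(rewrite /inI; lia)).
  exists (EA0 i j k l); split => //=.
  by rewrite /Av -/LA E c2q -/(ep k).
- have IH1 := IH k.+1 (ltac:(lia)) (ltac:(lia)).
  have he0 := ep_ge0 k; have he1 := @ep_lt1s k (ltac:(lia)).
  have hm := ep_mono Hk1.
  move=> e He /srcA [He1|[l ->]] /=.
    subst e; move: He => /= He.
    have -> : (k < s)%N = true by lia.
    rewrite IH1 /Av -/LA; case Eh: hb HW => HW /=; case: (ltnP LA k) => Hl1; case: (ltnP LA k.+1) => Hl2 /=; try lra.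
    have Heq : LA = k by lia.
    have := @lastA_nF i j (ltac:(lia)); by rewrite -/LA Heq He.
  rewrite c2q /Av -/(ep k) -/LA; case Eh: hb HW => HW /=; case: (ltnP LA k) => Hl /=; try lra.
- have IH1 := IH k.+1 (ltac:(lia)) (ltac:(lia)).
  case E: (hb && (LA < k)%N).
    exists (EA1 i j k); split => //=.
      by apply: lastA_F; move/andP: E => [_ ?]; lia.
    have -> : (k < s)%N = true by lia.
    rewrite IH1 /Av -/LA E; move/andP: E => [-> ?] /=.
    by rewrite ifT ?add0r //; lia.
  have [l _ Hl] := Hf.2.2.2.2.1 j k (ltac:(rewrite /inI; lia)) (ltac:(rewrite /inI; lia)).
  exists (EA0 i j k l); split => //=.
  by rewrite /Av -/LA E c2q -/(ep k).
Qed.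

Lemma yU : y (U i) = if hb then Ww else qq i + Uu.
Proof.
have hq := q4 Hi1.
have Hf := Ffun HiI.
have HB1 := yB1.
have HW : hb -> Ww = Uu by move=> /andP [H _]; apply: HWU.
apply: yval; [by rewrite /= HiI | by [] | |].
  move=> e He /srcU [[l ->]|[l ->]] /=; rewrite ?HB1 -/(qq i);
    case Eh: hb HW => HW /=; try lra; have := HW isT; lra.
case Eh: hb.
  have [l _ Hl] := Hf.1; exists (EU1 i l); split => //=.
  by rewrite HB1 Eh add0r.
have [l _ Hl] := Hf.2.1; exists (EU0 i l); split => //=.
Qed.

Definition Wv := if hb then (if a1sq r s F i then Ww else qq i + Ww)
                 else (if hi then qq i + Ww else 2 * qq i + Uu).

Lemma yW : y (W i) = Wv.
Proof.
have hq := q4 Hi1.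
have Hf := Ffun HiI.
have HW : hb -> Ww = Uu by move=> /andP [H _]; apply: HWU.
apply: yval; [by rewrite /= HiI | by [] | |].
  move=> e He /srcW [[j [l He1]]|[l ->]] /=.
    subst e; have := FE He; rewrite /= => /and3P [_ Hj _].
    rewrite (@yA j 1) //.
    rewrite /Av /Wv ep1 addr0.
    case Eh: hb HW => HW /=.
      have HW' := HW isT.
      case Ea: (a1sq r s F i).
        case: (ltnP (lastA s F i j) 1) => /= Hl; lra.
      case: (ltnP (lastA s F i j) 1) => /= Hl; last lra.
      have : a1sq r s F i.
        apply/hasP; exists j; first by rewrite mem_iota; move: Hj; rewrite /inI; lia.
        by rewrite a1sub_last; apply/eqP; lia.
      by rewrite Ea.
    case Ehi: hi.
      have := HWU Ehi; lra.
    lra.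
  rewrite /Wv -/(qq i); case Eh: hb HW => HW /=.
    by case: (a1sq r s F i); lra.
  case Ehi: hi Hd => Hd2; lra.
rewrite /Wv; case Eh: hb.
  case Ea: (a1sq r s F i).
    have /hasP [j Hj Hj2] := Ea.
    move: Hj; rewrite mem_iota => Hj.
    have [l _ Hl] := Hf.2.2.2.2.2 j (ltac:(rewrite /inI; lia)).
    exists (EW i j l); split => //=.
    rewrite (@yA _ 1); last by rewrite s0.
      by rewrite /Av Eh; move: Hj2; rewrite a1sub_last => /eqP ->; rewrite add0r.
    apply/andP; split; lia.
  have [l _ Hl] := Hf.2.2.1; exists (EW0 i l); split => //=.
case Ehi: hi.
  have [l _ Hl] := Hf.2.2.1; exists (EW0 i l); split => //=.
have [l _ Hl] := Hf.2.2.2.2.2 1%N (ltac:(rewrite /inI; lia)).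
exists (EW i 1 l); split => //=.
rewrite (@yA _ 1); last by rewrite s0.
  by rewrite /Av Eh ep1 add0r addr0.
by rewrite r0.
Qed.


Ltac fin := solve [ split; first [ by [] | by case | (move=> ?; lra) | (move=> ?; exfalso; lra) ] ].

Lemma optA1 j k : F (EA1 i j k) -> inI r j -> inI s k ->
  (cost r s (EA1 i j k) + y (dst n r s (EA1 i j k)) = y (A i j k) <->
   hb && (lastA s F i j < k)%N).
Proof.
move=> He Hj Hk; rewrite /= add0r yA //.
have /andP [Hka Hkb] : (1 <= k <= s)%N := Hk.
have hq := q4 Hi1.
have he0 := ep_ge0 k.
have hm := @ep_mono k (ltac:(move: Hk; rewrite /inI; lia)).
have he1 := @ep_lt1s k (ltac:(move: Hk; rewrite /inI; lia)).
have HW : hb -> Ww = Uu by move=> /andP [H _]; apply: HWU.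
set LA := lastA s F i j.
case: (ltnP k s) => Hks.
  have Hk1 : inI s k.+1 by move: Hk Hks; clear; rewrite /inI; lia.
  rewrite (@yA j k.+1) //.
  rewrite /Av -/LA; case Eh: hb; (try have HW' := HW Eh) => /=;
    case: (ltnP LA k) => Hl1; case: (ltnP LA k.+1) => Hl2 /=; try fin; try (exfalso; lia).
rewrite yB1 /Av -/LA; case Eh: hb; (try have HW' := HW Eh) => /=;
  case: (ltnP LA k) => Hl1 /=; try fin.
Qed.

Lemma optA0 j k l : inI r j -> inI s k ->
  (cost r s (EA0 i j k l) + y (dst n r s (EA0 i j k l)) = y (A i j k) <->
   (hb && (k <= lastA s F i j)%N) || ~~ hb).
Proof.
move=> Hj Hk; rewrite /= yA // c2q -/(ep k).
have hq := q4 Hi1.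
have he0 := ep_ge0 k.
have HW : hb -> Ww = Uu by move=> /andP [H _]; apply: HWU.
rewrite /Av; case Eh: hb; (try have HW' := HW Eh) => /=;
  case: (ltnP (lastA s F i j) k) => Hl1 /=; try fin.
Qed.

Lemma optB1 j : F (EB1 i j) -> inI (r * s) j ->
  (cost r s (EB1 i j) + y (dst n r s (EB1 i j)) = y (B i j) <->
   hb || (hi && ~~ b1sub r s F i && (lastB r s F i < j)%N)).
Proof.
move=> He Hj; rewrite /= add0r yB //.
have /andP [Hja Hjb] : (1 <= j <= r * s)%N := Hj.
have hq := q4 Hi1.
have hm := @ep_mono j (ltac:(move: Hj; rewrite /inI; lia)).
have he0 := ep_ge0 j.
have he1 := @ep_lt1 j (ltac:(move: Hj; rewrite /inI; lia)).
have := lastB_le i.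
rewrite /hb b1sub_last /Bv; set LB := lastB r s F i => HLB.
have Hd2 := Hd.
case: (ltnP j (r * s)) => Hjs.
  have Hj1 : inI (r * s) j.+1 by move: Hj Hjs; clear; rewrite /inI; lia.
  rewrite (@yB j.+1) // /Bv -/LB; case Ehi: hi Hd2 => Hd2 /=;
    case: (posnP LB) => H0 /=;
    case: (ltnP LB j) => Hl1; case: (ltnP LB j.+1) => Hl2 /=; try fin; try (exfalso; lia).
case Ehi: hi Hd2 => Hd2 /=;
  case: (posnP LB) => H0 /=;
  case: (ltnP LB j) => Hl1 /=; try fin; try (exfalso; lia).
Qed.

Lemma optB0 j l : inI (r * s) j ->
  (cost r s (EB0 i j l) + y (dst n r s (EB0 i j l)) = y (B i j) <->
   (hi && ~~ b1sub r s F i && (j <= lastB r s F i)%N) || ~~ hi).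
Proof.
move=> Hj; rewrite /= yB // c2q -/(ep j).
have /andP [Hja Hjb] : (1 <= j <= r * s)%N := Hj.
have hq := q4 Hi1.
have he0 := ep_ge0 j.
rewrite b1sub_last /Bv; set LB := lastB r s F i.
have Hd2 := Hd.
case Ehi: hi Hd2 => Hd2 /=;
  case: (posnP LB) => H0 /=;
  case: (ltnP LB j) => Hl1 /=; try fin; try (exfalso; lia).
Qed.

Lemma optU1 l :
  (cost r s (EU1 i l) + y (dst n r s (EU1 i l)) = y (U i) <-> hb).
Proof.
rewrite /= add0r yB1 yU.
have hq := q4 Hi1.
case Eh: hb => /=; fin.
Qed.

Lemma optU0 l :
  (cost r s (EU0 i l) + y (dst n r s (EU0 i l)) = y (U i) <-> ~~ hb).
Proof.
rewrite /= yU -/(qq i).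
have hq := q4 Hi1.
have HW : hb -> Ww = Uu by move=> /andP [H _]; apply: HWU.
case Eh: hb; (try have HW' := HW Eh) => /=; try fin.
Qed.

Lemma optW j l : inI r j ->
  (cost r s (EW i j l) + y (dst n r s (EW i j l)) = y (W i) <->
   (hb && a1sq r s F i && a1sub s F i j) || ~~ hi).
Proof.
move=> Hj; rewrite /= add0r yW (@yA j 1) //.
have hq := q4 Hi1.
rewrite /Av /Wv ep1 addr0 a1sub_last /hb.
have Hd2 := Hd.
case Ehi: hi Hd2 => Hd2 /=;
  case: (b1sub r s F i) => /=; case: (a1sq r s F i) => /=;
  case: (posnP (lastA s F i j)) => H0 /=; case: (ltnP (lastA s F i j) 1) => H1 /=; try fin; try (exfalso; lia).
Qed.

Lemma optW0 l :
  (cost r s (EW0 i l) + y (dst n r s (EW0 i l)) = y (W i) <->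
   (hi && ~~ b1sub r s F i) || (hb && ~~ a1sq r s F i)).
Proof.
rewrite /= yW -/(qq i).
have hq := q4 Hi1.
rewrite /Wv /hb.
have Hd2 := Hd.
case Ehi: hi Hd2 => Hd2 /=;
  case: (b1sub r s F i) => /=; case: (a1sq r s F i) => /=; try fin.
Qed.

End Level.

Lemma Pinv m : (1 <= m <= n.+1)%N ->
  ((reset n r s F < m)%N -> y (wvert n m) = y (uvert n m)) /\
  ((m <= reset n r s F)%N -> y (wvert n m) = y (uvert n m) + qq m).
Proof.
have HR := reset_le.
suff H : forall d m, (m + d = n.+1)%N -> (1 <= m)%N ->
  ((reset n r s F < m)%N -> y (wvert n m) = y (uvert n m)) /\
  ((m <= reset n r s F)%N -> y (wvert n m) = y (uvert n m) + qq m).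
  by move=> /andP [H1 H2]; apply: (H (n.+1 - m)%N) => //; lia.
elim=> [|d IH] {}m Hmd Hm1.
  rewrite addn0 in Hmd; subst m.
  rewrite /uvert /wvert ltnn; split=> // H; lia.
have Hin : (m <= n)%N by lia.
have [IH1 IH2] := IH m.+1 (ltac:(lia)) (ltac:(lia)).
have Hd : if (reset n r s F <= m)%N then y (wvert n m.+1) = y (uvert n m.+1)
          else y (uvert n m.+1) + 4 * qq m <= y (wvert n m.+1).
  case: ifP => H.
    by apply: IH1; lia.
  rewrite IH2 -?qS; [lra | lia].
have HU := yU Hm1 Hin Hd.
have HW := yW Hm1 Hin Hd.
have hq := q4 Hm1.
rewrite /uvert /wvert Hin HU HW /Wv /hb.
case: (ltngtP (reset n r s F) m) => HRm.
- split=> // _.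
  rewrite /=.
  case Eb: (b1sub r s F m) => /=.
    have Hr : (reset n r s F < m <= n)%N by rewrite HRm Hin.
    by rewrite (reset_gt Hr Eb).
  rewrite -(HWU Hd (ltnW HRm)); lra.
- split=> [|_]; first lia.
  rewrite /=; lra.
- split=> [|_]; first lia.
  have HP := reset_P (ltac:(lia)).
  rewrite HRm in HP; move/andP: HP => [-> /negbTE ->].
  rewrite ?leqnn /=; lra.
Qed.

Lemma Hd_of i : (1 <= i)%N -> (i <= n)%N ->
  if (reset n r s F <= i)%N then y (wvert n i.+1) = y (uvert n i.+1)
  else y (uvert n i.+1) + 4 * qq i <= y (wvert n i.+1).
Proof.
move=> H1 H2; have [IH1 IH2] := @Pinv i.+1 (ltac:(lia)).
case: ifP => H.
  by apply: IH1; lia.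
rewrite IH2 -?qS; [lra | lia].
Qed.

Lemma cond_eqs i : (1 <= i)%N -> (i <= n)%N ->
  let hi := (reset n r s F <= i)%N in
  let b1 := b1sub r s F i in let a1 := a1sq r s F i in
  [/\ ((reset n r s F < i)%N && b1) = [&& hi, b1 & a1],
      ((reset n r s F < i)%N && ~~ b1) = hi && ~~ b1,
      (i == reset n r s F) = [&& hi, b1 & ~~ a1] &
      (i < reset n r s F)%N = ~~ hi].
Proof.
move=> H1 H2 /=.
case: (ltngtP (reset n r s F) i) => HRm /=.
- have Hr : (reset n r s F < i <= n)%N by rewrite HRm H2.
  by split=> //; case Eb: (b1sub r s F i) => //=; rewrite (reset_gt Hr Eb).
- by split.
- have HP := reset_P (ltac:(lia)).
  rewrite HRm in HP; move/andP: HP => [-> /negbTE ->].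
  by rewrite ?leqnn ?ltnn ?eqxx.
Qed.

Lemma key e : F e ->
  (cost r s e + y (dst n r s e) = y (src e) <-> inBcond n r s F e).
Proof.
move=> He; have HE := FE He.
case: e He HE => [i j k|i j k l|i j|i j l|i l|i l|i j l|i l] He /=.
- move=> /and3P [Hi Hj Hk]; move: (Hi); rewrite /inI => /andP [Hi1 Hin].
  have Hd := Hd_of Hi1 Hin.
  rewrite (optA1 Hi1 Hin Hd He Hj Hk) /hb.
  have [E1 E2 E3 E4] := cond_eqs Hi1 Hin; rewrite /= in E1 E2 E3 E4.
  rewrite E1 E3.
  by case: (reset n r s F <= i)%N; case: (b1sub r s F i); case: (a1sq r s F i).
- move=> /and4P [Hi Hj Hk _]; move: (Hi); rewrite /inI => /andP [Hi1 Hin].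
  have Hd := Hd_of Hi1 Hin.
  rewrite (optA0 Hi1 Hin Hd l Hj Hk) /hb.
  have [E1 E2 E3 E4] := cond_eqs Hi1 Hin; rewrite /= in E1 E2 E3 E4.
  rewrite E1 E2 E3 E4.
  by case: (reset n r s F <= i)%N; case: (b1sub r s F i); case: (a1sq r s F i);
    case: (k <= lastA s F i j)%N.
- move=> /andP [Hi Hj]; move: (Hi); rewrite /inI => /andP [Hi1 Hin].
  have Hd := Hd_of Hi1 Hin.
  rewrite (optB1 Hi1 Hin Hd He Hj) /hb.
  have [E1 E2 E3 E4] := cond_eqs Hi1 Hin; rewrite /= in E1 E2 E3 E4.
  rewrite E1 E2 E3.
  by case: (reset n r s F <= i)%N; case: (b1sub r s F i); case: (a1sq r s F i);
    case: (lastB r s F i < j)%N.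
- move=> /and3P [Hi Hj _]; move: (Hi); rewrite /inI => /andP [Hi1 Hin].
  have Hd := Hd_of Hi1 Hin.
  rewrite (optB0 Hi1 Hin Hd l Hj).
  have [E1 E2 E3 E4] := cond_eqs Hi1 Hin; rewrite /= in E1 E2 E3 E4.
  rewrite E2 E4.
  by case: (reset n r s F <= i)%N; case: (b1sub r s F i); case: (a1sq r s F i);
    case: (j <= lastB r s F i)%N.
- move=> /andP [Hi _]; move: (Hi); rewrite /inI => /andP [Hi1 Hin].
  have Hd := Hd_of Hi1 Hin.
  rewrite (optU1 Hi1 Hin Hd l) /hb.
  have [E1 E2 E3 E4] := cond_eqs Hi1 Hin; rewrite /= in E1 E2 E3 E4.
  rewrite E1 E3.
  by case: (reset n r s F <= i)%N; case: (b1sub r s F i); case: (a1sq r s F i).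
- move=> /andP [Hi _]; move: (Hi); rewrite /inI => /andP [Hi1 Hin].
  have Hd := Hd_of Hi1 Hin.
  rewrite (optU0 Hi1 Hin Hd l) /hb.
  have [E1 E2 E3 E4] := cond_eqs Hi1 Hin; rewrite /= in E1 E2 E3 E4.
  rewrite E2 E4.
  by case: (reset n r s F <= i)%N; case: (b1sub r s F i); case: (a1sq r s F i).
- move=> /and3P [Hi Hj _]; move: (Hi); rewrite /inI => /andP [Hi1 Hin].
  have Hd := Hd_of Hi1 Hin.
  rewrite (optW Hi1 Hin Hd l Hj) /hb.
  have [E1 E2 E3 E4] := cond_eqs Hi1 Hin; rewrite /= in E1 E2 E3 E4.
  rewrite E1 E4.
  by case: (reset n r s F <= i)%N; case: (b1sub r s F i); case: (a1sq r s F i);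
    case: (a1sub s F i j).
- move=> /andP [Hi _]; move: (Hi); rewrite /inI => /andP [Hi1 Hin].
  have Hd := Hd_of Hi1 Hin.
  rewrite (optW0 Hi1 Hin Hd l) /hb.
  have [E1 E2 E3 E4] := cond_eqs Hi1 Hin; rewrite /= in E1 E2 E3 E4.
  rewrite E2 E3.
  by case: (reset n r s F <= i)%N; case: (b1sub r s F i); case: (a1sq r s F i).
Qed.

Lemma main_sec e : optimal n r s F y e <-> inBF n r s t F e.
Proof.
rewrite /optimal /inBF; split.
  by case=> He /(key He) Hc; rewrite FE // He Hc.
by case/and3P => _ He Hc; split=> //; apply/(key He).
Qed.

End Main.

Theorem mainTheorem5 (n r s t : nat) (F : pred edge) (y : vertex -> rat) :
  (0 < r)%N -> (0 < s)%N ->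
  (forall e, F e -> inEdges n r s t e) ->
  functional n r s t F ->
  is_shortest_dist n r s F y ->
  forall e, optimal n r s F y e <-> inBF n r s t F e.
Proof. move=> r0 s0 FE Ffun Hy e; exact: main_sec. Qed.
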